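(* Let $P\subseteq\mathbb R\times[0,\infty)$ be a countable set of points and let $\Gamma(P)$ be the graph with vertex set $P$ in which distinct $p_i=(x_i,y_i)$, $p_j=(x_j,y_j)$ are adjacent if and only if $|x_i-x_j|<e^{\frac12(y_i+y_j)}$. Then: (i) if $p_ip_j$ is an edge of $\Gamma(P)$ and $p_k\in P$ lies above the line segment $[p_i,p_j]$ (i.e. the segment $[p_i,p_j]$ intersects the vertical line through $p_k$ at a point below $p_k$), then at least one of $p_kp_i$, $p_kp_j$ is an edge of $\Gamma(P)$; (ii) if $p_ip_j$ and $p_kp_\ell$ are edges of $\Gamma(P)$ and the line segments $[p_i,p_j]$ and $[p_k,p_\ell]$ cross, then at least one of $p_ip_k, p_ip_\ell, p_jp_k, p_jp_\ell$ is an edge of $\Gamma(P)$. *)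

(* Defs.v *)
From Stdlib Require Export Reals.
Open Scope R_scope.

Definition pt := (R * R)%type.

Definition countable_set (P : pt -> Prop) : Prop :=
  exists f : pt -> nat, forall p q, P p -> P q -> f p = f q -> p = q.

Definition in_upper_halfplane (P : pt -> Prop) : Prop :=
  forall p, P p -> 0 <= snd p.

Definition adj (p q : pt) : Prop :=
  p <> q /\ Rabs (fst p - fst q) < exp ((snd p + snd q) / 2).

Definition seg_pt (p q : pt) (t : R) : pt :=
  ((1 - t) * fst p + t * fst q, (1 - t) * snd p + t * snd q).

Definition above_segment (r p q : pt) : Prop :=
  exists t, 0 <= t <= 1 /\ fst (seg_pt p q t) = fst r /\ snd (seg_pt p q t) < snd r.

Definition segments_cross (p1 q1 p2 q2 : pt) : Prop :=
  exists s t, 0 < s < 1 /\ 0 < t < 1 /\ seg_pt p1 q1 s = seg_pt p2 q2 t.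

(* Main.v *)
Require Import Defs.
From Stdlib Require Import Reals Lra Classical.
Open Scope R_scope.

Lemma exp_mono (x y : R) : x <= y -> exp x <= exp y.
Proof.
  intros H. destruct (Rle_lt_or_eq_dec x y H) as [H1|H1].
  - left. now apply exp_increasing.
  - subst. lra.
Qed.

Lemma adj_sym p q : adj p q -> adj q p.
Proof.
  intros [H1 H2]. split; [congruence|]. rewrite Rabs_minus_sym.
  now replace ((snd q + snd p)/2) with ((snd p + snd q)/2) by lra.
Qed.

Lemma adj_pick r p q : adj p q ->
  Rabs (fst r - fst q) < exp ((snd r + snd q)/2) -> adj r p \/ adj r q.
Proof.
  intros Hpq H. destruct (classic (r = q)) as [E|E].
  - subst. left. now apply adj_sym.
  - right. now split.
Qed.

Lemma exp_half a b : exp ((a + b)/2) = exp (a/2) * exp (b/2).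
Proof. rewrite <- exp_plus. f_equal. lra. Qed.

Lemma part1 pi pj pk : adj pi pj -> above_segment pk pi pj -> adj pk pi \/ adj pk pj.
Proof.
  destruct pi as [xi yi], pj as [xj yj], pk as [xk yk].
  intros Hij [t [Ht [Hx Hy]]]. unfold seg_pt in *; simpl in *.
  destruct (Rle_dec yi yj) as [Hle|Hle].
  - apply adj_pick; [exact Hij|]. simpl.
    destruct Hij as [_ Hd]; simpl in Hd.
    replace (xk - xj) with ((1 - t) * (xi - xj)) by lra.
    rewrite Rabs_mult, (Rabs_pos_eq (1 - t)) by lra.
    assert (exp ((yi + yj)/2) <= exp ((yk + yj)/2)) by (apply exp_mono; nra).
    assert (0 <= Rabs (xi - xj)) by apply Rabs_pos.
    nra.
  - apply adj_sym in Hij.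
    destruct (adj_pick (xk, yk) _ _ Hij) as [H|H]; [| tauto | tauto].
    destruct Hij as [_ Hd]; simpl in Hd |- *.
    replace (xk - xi) with (t * (xj - xi)) by lra.
    rewrite Rabs_mult, (Rabs_pos_eq t) by lra.
    assert (exp ((yj + yi)/2) <= exp ((yk + yi)/2)) by (apply exp_mono; nra).
    assert (0 <= Rabs (xj - xi)) by apply Rabs_pos.
    nra.
Qed.

Lemma core_ineq e1 e2 s t A B C D :
  0 < s < 1 -> 0 < t < 1 -> 0 < A -> 0 < B -> 0 < C -> 0 < D ->
  A <= D -> C <= B -> A <= B -> C <= D ->
  Rabs e1 < A * B -> Rabs e2 < C * D ->
  Rabs (-s*e1 + t*e2) < A*C \/ Rabs (-s*e1 - (1-t)*e2) < A*D \/
  Rabs ((1-s)*e1 + t*e2) < B*C \/ Rabs ((1-s)*e1 - (1-t)*e2) < B*D.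
Proof.
  intros Hs Ht HA HB HC HD H1 H2 H3 H4 He1 He2.
  assert (HAB : A * B <= D * B) by nra.
  assert (HCD : C * D <= B * D) by nra.
  assert (P1 : -(A*B) < e1 < A*B) by (split; [apply Ropp_lt_cancel|]; 
     [rewrite Ropp_involutive; apply Rle_lt_trans with (Rabs e1); [rewrite <- Rabs_Ropp; apply RRle_abs|exact He1]
     | apply Rle_lt_trans with (Rabs e1); [apply RRle_abs|exact He1]]).
  assert (P2 : -(C*D) < e2 < C*D) by (split; [apply Ropp_lt_cancel|]; 
     [rewrite Ropp_involutive; apply Rle_lt_trans with (Rabs e2); [rewrite <- Rabs_Ropp; apply RRle_abs|exact He2]
     | apply Rle_lt_trans with (Rabs e2); [apply RRle_abs|exact He2]]).
  clear He1 He2.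
  set (a1 := s*e1). set (b1 := (1-s)*e1). set (c1 := t*e2). set (d1 := (1-t)*e2).
  replace (-s*e1 + t*e2) with (-a1 + c1) by (unfold a1, c1; ring).
  replace (-s*e1 - (1-t)*e2) with (-a1 - d1) by (unfold a1, d1; ring).
  replace ((1-s)*e1 + t*e2) with (b1 + c1) by (unfold b1, c1; ring).
  replace ((1-s)*e1 - (1-t)*e2) with (b1 - d1) by (unfold b1, d1; ring).
  assert (E1 : a1 + b1 = e1) by (unfold a1, b1; ring).
  assert (E2 : c1 + d1 = e2) by (unfold c1, d1; ring).
  destruct (Rle_dec 0 e1) as [S1|S1]; destruct (Rle_dec 0 e2) as [S2|S2].
  - assert (0 <= a1) by (unfold a1; nra). assert (0 <= b1) by (unfold b1; nra).
    assert (0 <= c1) by (unfold c1; nra). assert (0 <= d1) by (unfold d1; nra).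
    right; right; right. apply Rabs_def1; lra.
  - assert (0 <= a1) by (unfold a1; nra). assert (0 <= b1) by (unfold b1; nra).
    assert (c1 < 0) by (unfold c1; nra). assert (d1 < 0) by (unfold d1; nra).
    assert (a1 < s * (A*B)) by (unfold a1; nra).
    assert (-c1 < t * (C*D)) by (unfold c1; nra).
    assert (-d1 < (1-t) * (C*D)) by (unfold d1; nra).
    assert (b1 < (1-s) * (A*B)) by (unfold b1; nra).
    assert ((1-s)*(A*B) <= (1-s)*(D*B)) by nra.
    assert ((1-t)*(C*D) <= (1-t)*(B*D)) by nra.
    assert ((1-s)*(A*B) <= A*B) by nra.
    assert ((1-t)*(C*D) <= C*D) by nra.
    destruct (Rlt_dec D (s*B)) as [Q|Q].
    + assert (C*D < s*B*D) by nra.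
      right; right; right. apply Rabs_def1; nra.
    + destruct (Rlt_dec B (t*D)) as [Q'|Q'].
      * assert (A*B < t*D*B) by nra.
        right; right; right. apply Rabs_def1; nra.
      * apply Rnot_lt_le in Q. apply Rnot_lt_le in Q'.
        assert (s*(A*B) <= A*D) by nra. assert (t*(C*D) <= B*C) by nra.
        destruct (Rle_dec ((1-t)*C) A) as [R1|R1].
        -- assert ((1-t)*(C*D) <= A*D) by nra.
           right; left. apply Rabs_def1; nra.
        -- apply Rnot_le_lt in R1. assert ((1-s)*(A*B) <= B*C) by nra.
           right; right; left. apply Rabs_def1; nra.
  - assert (a1 < 0) by (unfold a1; nra). assert (b1 < 0) by (unfold b1; nra).
    assert (0 <= c1) by (unfold c1; nra). assert (0 <= d1) by (unfold d1; nra).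
    assert (-a1 < s * (A*B)) by (unfold a1; nra).
    assert (c1 < t * (C*D)) by (unfold c1; nra).
    assert (d1 < (1-t) * (C*D)) by (unfold d1; nra).
    assert (-b1 < (1-s) * (A*B)) by (unfold b1; nra).
    assert ((1-s)*(A*B) <= (1-s)*(D*B)) by nra.
    assert ((1-t)*(C*D) <= (1-t)*(B*D)) by nra.
    assert ((1-s)*(A*B) <= A*B) by nra.
    assert ((1-t)*(C*D) <= C*D) by nra.
    destruct (Rlt_dec D (s*B)) as [Q|Q].
    + assert (C*D < s*B*D) by nra.
      right; right; right. apply Rabs_def1; nra.
    + destruct (Rlt_dec B (t*D)) as [Q'|Q'].
      * assert (A*B < t*D*B) by nra.
        right; right; right. apply Rabs_def1; nra.
      * apply Rnot_lt_le in Q. apply Rnot_lt_le in Q'.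
        assert (s*(A*B) <= A*D) by nra. assert (t*(C*D) <= B*C) by nra.
        destruct (Rle_dec ((1-t)*C) A) as [R1|R1].
        -- assert ((1-t)*(C*D) <= A*D) by nra.
           right; left. apply Rabs_def1; nra.
        -- apply Rnot_le_lt in R1. assert ((1-s)*(A*B) <= B*C) by nra.
           right; right; left. apply Rabs_def1; nra.
  - assert (a1 < 0) by (unfold a1; nra). assert (b1 < 0) by (unfold b1; nra).
    assert (c1 < 0) by (unfold c1; nra). assert (d1 < 0) by (unfold d1; nra).
    right; right; right. apply Rabs_def1; lra.
Qed.

Lemma pick2 u u' v : adj u' u ->
  Rabs (fst u - fst v) < exp ((snd u + snd v)/2) -> adj u v \/ adj u' v.
Proof.
  intros H1 H2. destruct (classic (u = v)) as [E|E].
  - subst. now right.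
  - left. now split.
Qed.

Lemma part2core a b c d s t : adj a b -> adj c d -> 0 < s < 1 -> 0 < t < 1 ->
  seg_pt a b s = seg_pt c d t -> snd a <= snd b -> snd c <= snd d ->
  adj a c \/ adj a d \/ adj b c \/ adj b d.
Proof.
  intros Hab Hcd Hs Ht Heq Hy1 Hy2.
  pose proof Hab as Hab'. pose proof Hcd as Hcd'.
  destruct a as [xa ya], b as [xb yb], c as [xc yc], d as [xd yd].
  unfold seg_pt in Heq; simpl in *. injection Heq as Hx Hy.
  destruct Hab' as [_ H1]. destruct Hcd' as [_ H2]. simpl in H1, H2.
  rewrite exp_half in H1, H2. rewrite Rabs_minus_sym in H1, H2.
  assert (ya <= yd) by nra. assert (yc <= yb) by nra.
  assert (exp (ya/2) <= exp (yd/2)) by (apply exp_mono; lra).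
  assert (exp (yc/2) <= exp (yb/2)) by (apply exp_mono; lra).
  assert (exp (ya/2) <= exp (yb/2)) by (apply exp_mono; lra).
  assert (exp (yc/2) <= exp (yd/2)) by (apply exp_mono; lra).
  destruct (core_ineq (xb - xa) (xd - xc) s t (exp (ya/2)) (exp (yb/2)) (exp (yc/2)) (exp (yd/2)))
    as [G|[G|[G|G]]]; try apply exp_pos; auto.
  - replace (- s * (xb - xa) + t * (xd - xc)) with (xa - xc) in G by lra.
    rewrite <- exp_half in G.
    destruct (pick2 (xa, ya) (xb, yb) (xc, yc)) as [K|K]; auto; try now apply adj_sym.
  - replace (- s * (xb - xa) - (1 - t) * (xd - xc)) with (xa - xd) in G by lra.
    rewrite <- exp_half in G.
    destruct (pick2 (xa, ya) (xb, yb) (xd, yd)) as [K|K]; auto; try now apply adj_sym.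
  - replace ((1 - s) * (xb - xa) + t * (xd - xc)) with (xb - xc) in G by lra.
    rewrite <- exp_half in G.
    destruct (pick2 (xb, yb) (xa, ya) (xc, yc)) as [K|K]; auto.
  - replace ((1 - s) * (xb - xa) - (1 - t) * (xd - xc)) with (xb - xd) in G by lra.
    rewrite <- exp_half in G.
    destruct (pick2 (xb, yb) (xa, ya) (xd, yd)) as [K|K]; auto.
Qed.

Lemma seg_swap p q s : seg_pt p q s = seg_pt q p (1 - s).
Proof. unfold seg_pt. f_equal; ring. Qed.

Theorem lemma2p1 (P : pt -> Prop) :
  countable_set P -> in_upper_halfplane P ->
  (forall pi pj pk, P pi -> P pj -> P pk ->
     adj pi pj -> above_segment pk pi pj -> adj pk pi \/ adj pk pj) /\
  (forall pi pj pk pl, P pi -> P pj -> P pk -> P pl ->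
     adj pi pj -> adj pk pl -> segments_cross pi pj pk pl ->
     adj pi pk \/ adj pi pl \/ adj pj pk \/ adj pj pl).
Proof.
  intros _ _. split.
  - intros pi pj pk _ _ _. apply part1.
  - intros pi pj pk pl _ _ _ _ Hij Hkl [s [t [Hs [Ht Heq]]]].
    assert (Hji := adj_sym _ _ Hij). assert (Hlk := adj_sym _ _ Hkl).
    assert (Hs' : 0 < 1 - s < 1) by lra. assert (Ht' : 0 < 1 - t < 1) by lra.
    destruct (Rle_dec (snd pi) (snd pj)); destruct (Rle_dec (snd pk) (snd pl)).
    + apply (part2core pi pj pk pl s t); auto.
    + rewrite (seg_swap pk pl) in Heq.
      destruct (part2core pi pj pl pk s (1-t)) as [G|[G|[G|G]]]; auto; lra.
    + rewrite (seg_swap pi pj) in Heq.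
      destruct (part2core pj pi pk pl (1-s) t) as [G|[G|[G|G]]]; auto; lra.
    + rewrite (seg_swap pi pj), (seg_swap pk pl) in Heq.
      destruct (part2core pj pi pl pk (1-s) (1-t)) as [G|[G|[G|G]]]; auto; lra.
Qed.
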